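(* Fix $\beta\in(0,1)$, $C_{\log}>0$, positive learning rates $\gamma^t_i,\gamma^{t+1}_i$ ($i\in[K]$), nonnegative loss-estimate vectors $\hat\ell^1,\dots,\hat\ell^t\in\mathbb{R}^K$, and a partition $[K]=U\cup V$ with $U\ne\emptyset$. With $p^t,p^{t+1},q^t,q^{t+1},\bar p^{t+1}$ as defined in the context, $$D^{t,t+1}(p^t,p^{t+1})-D^{t,t+1}_U(q^t,q^{t+1})\le D^{t,t+1}_V(p^t,\bar p^{t+1})+\Big(D^{t,t+1}_U(p^t,\bar p^{t+1})-D^{t,t+1}_U(q^t,q^{t+1})\Big)+D^{t+1}(\bar p^{t+1},p^{t+1}).$$
   Context: Regularizer: $\phi^s(x)=-C_{\log}\sum_{i\in[K]}\log x_i-\frac{1}{1-\beta}\sum_{i\in[K]}\gamma^s_ix_i^\beta$ for $s\in\{t,t+1\}$; for $\mathcal{I}\subseteq[K]$, $\phi^s_{\mathcal{I}}(x)=-C_{\log}\sum_{i\in\mathcal{I}}\log x_i-\frac{1}{1-\beta}\sum_{i\in\mathcal{I}}\gamma^s_ix_i^\beta$. Skewed Bregman divergences: $D^{s,r}(x,y)=\phi^s(x)-\phi^r(y)-\langle\nabla\phi^r(y),x-y\rangle$, $D^{s,r}_{\mathcal{I}}(x,y)=\phi^s_{\mathcal{I}}(x)-\phi^r_{\mathcal{I}}(y)-\langle\nabla\phi^r_{\mathcal{I}}(y),x-y\rangle$ (which only involves coordinates in $\mathcal{I}$), and $D^s=D^{s,s}$. $\Omega_K$ is the simplex, $\Omega_U=\{p\in\Omega_K:\sum_{i\in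 U}p_i=1\}$. Define $p^s=\arg\min_{p\in\Omega_K}\langle p,\sum_{\tau<s}\hat\ell^\tau\rangle+\phi^s(p)$ and $q^s=\arg\min_{p\in\Omega_U}\langle p,\sum_{\tau<s}\hat\ell^\tau\rangle+\phi^s(p)$ for $s\in\{t,t+1\}$. Define $\bar p^{t+1}=\bar p^{t+1}_U+\bar p^{t+1}_V$ where $\bar p^{t+1}_U=\arg\min\{\langle x,\sum_{\tau\le t}\hat\ell^\tau\rangle+\phi^{t+1}_U(x): x\in\mathbb{R}^K_{\ge0},\ \sum_{i\in V}x_i=0,\ \sum_{i\in U}x_i=\sum_{i\in U}p^t_i\}$ and $\bar p^{t+1}_V=\arg\min\{\langle x,\sum_{\tau\le t}\hat\ell^\tau\rangle+\phi^{t+1}_V(x): x\in\mathbb{R}^K_{\ge0},\ \sum_{i\in U}x_i=0,\ \sum_{i\in V}x_i=\sum_{i\in V}p^t_i\}$. *)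

(* Defs.v *)
From HB Require Import structures.
From mathcomp Require Import all_boot all_order all_algebra.
From mathcomp Require Import all_classical all_reals all_analysis.
Set Implicit Arguments. Unset Strict Implicit. Unset Printing Implicit Defensive.
Import Order.TTheory GRing.Theory Num.Theory.
Local Open Scope ring_scope.

Section Defs.
Variables (R : realType) (K : nat).
Implicit Types (x y : 'I_K -> R) (I : {set 'I_K}) (gam : 'I_K -> R).

Definition phiI (C beta : R) gam I x : R :=
  - C * (\sum_(i in I) ln (x i)) - (1 - beta)^-1 * (\sum_(i in I) gam i * x i `^ beta).

Definition dphi (C beta : R) gam (i : 'I_K) y : R :=
  - C / y i - (1 - beta)^-1 * (gam i * (beta * y i `^ (beta - 1))).

(* skewed Bregman divergence D^{s,r}_I(x,y); I = [set: 'I_K] gives D^{s,r} *)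
Definition BregI (C beta : R) (gs gr : 'I_K -> R) I x y : R :=
  phiI C beta gs I x - phiI C beta gr I y
  - \sum_(i in I) dphi C beta gr i y * (x i - y i).

Definition objI (C beta : R) gam I (L : 'I_K -> R) x : R :=
  \sum_i x i * L i + phiI C beta gam I x.

Definition is_argmin (S : ('I_K -> R) -> Prop) (f : ('I_K -> R) -> R) x :=
  S x /\ forall y, S y -> f x <= f y.

(* feasible set of the minimisation defining p^s : the simplex, intersected
   with the domain of the log-barrier (positive coordinates) *)
Definition simplex_dom x :=
  (forall i, 0 <= x i) /\ \sum_i x i = 1 /\ (forall i, 0 < x i).

(* Omega_U intersected with the domain of phi_U (positive on U) *)
Definition OmegaU_dom I x :=
  (forall i, 0 <= x i) /\ \sum_i x i = 1 /\ \sum_(i in I) x i = 1 /\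
  (forall i, i \in I -> 0 < x i).

(* feasible set for pbar_I : x >= 0, x vanishes (in sum) off I, prescribed
   mass m on I, and positive on I (domain of phi_I) *)
Definition restr_dom I (m : R) x :=
  (forall i, 0 <= x i) /\ \sum_(i in ~: I) x i = 0 /\ \sum_(i in I) x i = m /\
  (forall i, i \in I -> 0 < x i).

End Defs.

(* Main.v *)
Require Import Defs.
From HB Require Import structures.
From mathcomp Require Import all_boot all_order all_algebra.
From mathcomp Require Import all_classical all_reals all_analysis.
From mathcomp Require Import ring lra.
Import Order.TTheory GRing.Theory Num.Theory.
Import numFieldNormedType.Exports.
Local Open Scope ring_scope.

Section H.
Variable R : realType.
Implicit Types (t df dg k a x d : R).

Lemma der_cstM (f : R -> R) t df k :
  is_derive t 1 f df -> is_derive t 1 (fun s => k * f s) (k * df).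
Proof.
move=> H.
have -> : (fun s => k * f s) = k *: f by apply/funext => s.
exact: is_deriveZ.
Qed.

Lemma der_add (f g : R -> R) t df dg :
  is_derive t 1 f df -> is_derive t 1 g dg -> is_derive t 1 (fun s => f s + g s) (df + dg).
Proof.
move=> Hf Hg.
have -> : (fun s => f s + g s) = f + g by apply/funext => s.
exact: is_deriveD.
Qed.

Lemma der_sub (f g : R -> R) t df dg :
  is_derive t 1 f df -> is_derive t 1 g dg -> is_derive t 1 (fun s => f s - g s) (df - dg).
Proof.
move=> Hf Hg.
have -> : (fun s => f s - g s) = f - g by apply/funext => s.
exact: is_deriveB.
Qed.

Lemma der_bigsum (I : eqType) (r : seq I) (P : pred I) (h : I -> R -> R) (dh : I -> R) t :
  (forall i, P i -> is_derive t 1 (h i) (dh i)) ->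
  is_derive t 1 (fun s => \sum_(i <- r | P i) h i s) (\sum_(i <- r | P i) dh i).
Proof.
move=> H; elim: r => [|a r IH].
  have -> : (fun s => \sum_(i <- [::] | P i) h i s) = cst 0.
    by apply/funext => s; rewrite big_nil.
  rewrite big_nil; exact: is_derive_cst.
rewrite big_cons; case Pa: (P a).
  have -> : (fun s => \sum_(i <- a :: r | P i) h i s) = (fun s => h a s + \sum_(i <- r | P i) h i s).
    by apply/funext => s; rewrite big_cons Pa.
  by apply: der_add => //; apply: H.
have -> : (fun s => \sum_(i <- a :: r | P i) h i s) = (fun s => \sum_(i <- r | P i) h i s).
  by apply/funext => s; rewrite big_cons Pa.
exact: IH.
Qed.

Lemma der_aff (g : R -> R) a x d t :
  is_derive (x + t * d) 1 g a -> is_derive t 1 (fun s => g (x + s * d)) (a * d).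
Proof.
move=> H.
have Hm : is_derive t 1 (fun s => s * d) d.
  have -> : (fun s => s * d) = (d \*: (@id R)).
    by apply/funext => s; rewrite /= mulrC.
  have H0 := (is_deriveZ d (is_derive_id t 1)).
  apply: (is_derive_eq H0).
  by rewrite /GRing.scale /= mulr1.
have Hu : is_derive t 1 (fun s => x + s * d) d.
  have H1 := (@der_add (cst x) (fun s => s * d) t 0 d (is_derive_cst x t 1) Hm).
  apply: (is_derive_eq H1).
  by rewrite add0r.
have -> : (fun s => g (x + s * d)) = g \o (fun s => x + s * d) by [].
exact: is_derive1_comp.
Qed.


Arguments der_add {f g t df dg}.
Arguments der_sub {f g t df dg}.
Arguments der_cstM {f t df} k.

Lemma der_lin t d : is_derive t 1 (fun s => s * d) d.
Proof.
have -> : (fun s => s * d) = (d \*: (@id R)).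
  by apply/funext => s; rewrite /= mulrC.
have H0 := (is_deriveZ d (is_derive_id t 1)).
apply: (is_derive_eq H0).
by rewrite /GRing.scale /= mulr1.
Qed.

Variable K : nat.

Lemma obj_derive (C beta : R) (gam : 'I_K -> R) (I : {set 'I_K}) (L x d : 'I_K -> R) t :
 (forall i, i \in I -> 0 < x i + t * d i) ->
 is_derive t 1 (fun s => objI C beta gam I L (fun i => x i + s * d i))
   (\sum_i d i * L i + \sum_(i in I) dphi C beta gam i (fun i => x i + t * d i) * d i).
Proof.
move=> Hpos.
have H1 : is_derive t 1 (fun s => \sum_i (x i + s * d i) * L i) (\sum_i L i * d i).
  apply: (@der_bigsum _ (index_enum 'I_K) xpredT (fun i s => (x i + s * d i) * L i)) => i _.
  exact: (@der_aff (fun u => u * L i) (L i) (x i) (d i) t (der_lin _ _)).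
have H2 : is_derive t 1 (fun s => \sum_(i in I) ln (x i + s * d i))
            (\sum_(i in I) (x i + t * d i)^-1 * d i).
  apply: (@der_bigsum _ (index_enum 'I_K) (fun i => i \in I) (fun i s => ln (x i + s * d i))) => i iI.
  have h := is_derive1_ln (Hpos i iI).
  exact: (@der_aff (@ln R) _ (x i) (d i) t h).
have H3 : is_derive t 1 (fun s => \sum_(i in I) gam i * (x i + s * d i) `^ beta)
            (\sum_(i in I) gam i * ((beta * (x i + t * d i) `^ (beta - 1)) * d i)).
  apply: (@der_bigsum _ (index_enum 'I_K) (fun i => i \in I) (fun i s => gam i * (x i + s * d i) `^ beta)) => i iI.
  apply: der_cstM.
  exact: (@der_aff (fun u => @powR R u beta) _ (x i) (d i) t (is_derive1_powR beta (Hpos i iI))).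
have H := der_add H1 (der_sub (der_cstM (- C) H2) (der_cstM ((1 - beta)^-1) H3)).
apply: (is_derive_eq H).
rewrite /dphi; congr (_ + _).
  by apply: eq_bigr => i _; rewrite mulrC.
rewrite !mulr_sumr -sumrB; apply: eq_bigr => i _.
rewrite mulrBl; congr (_ - _).
  by rewrite !mulrA.
by rewrite !mulrA.
Qed.


Lemma argmin_stationary (C beta : R) gam (I : {set 'I_K}) (L : 'I_K -> R)
  (S : ('I_K -> R) -> Prop) (x d : 'I_K -> R) (e : R) :
  0 < e ->
  (forall s : R, `|s| < e -> S (fun i => x i + s * d i) /\ (forall i, i \in I -> 0 < x i + s * d i)) ->
  is_argmin S (objI C beta gam I L) x ->
  \sum_i d i * L i + \sum_(i in I) dphi C beta gam i x * d i = 0.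
Proof.
move=> e0 Hs [Sx Hmin].
set f := fun s => objI C beta gam I L (fun i => x i + s * d i).
have ex : (fun i => x i + 0 * d i) = x by apply/funext=> i; rewrite mul0r addr0.
have itv : forall s : R, s \in `]-e, e[ -> `|s| < e.
  by move=> s; rewrite in_itv /= ltr_norml.
have D0 : is_derive (0:R) (1:R) f (0:R).
  apply: (@derive1_at_min _ f (-e) e 0).
  - by rewrite lerNl; apply: ltW; rewrite (lt_le_trans _ (ltW e0)) // oppr_lt0.
  - move=> s /itv Hs'.
    have h := (@obj_derive C beta gam I L x d s (proj2 (Hs s Hs'))).
    by case: h.
  - by rewrite in_itv /= oppr_lt0 e0.
  - move=> s /itv Hs'; rewrite /f ex; apply: Hmin; exact: (proj1 (Hs s Hs')).
have H0 : `|(0:R)| < e by rewrite normr0.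
have Dv := @obj_derive C beta gam I L x d 0 (proj2 (Hs 0 H0)).
move: D0 Dv => [_ E0] [_ E1]; rewrite E0 ex in E1.
by rewrite -E1.
Qed.


Lemma near_pos (I : {set 'I_K}) (x d : 'I_K -> R) :
  (forall i, i \in I -> 0 < x i) ->
  exists2 e : R, 0 < e & forall s : R, `|s| < e -> forall i, i \in I -> 0 < x i + s * d i.
Proof.
move=> Hx.
have : \forall s \near (0:R), forall i, (i \in I -> 0 < x i + s * d i).
  apply: (@filter_forall R 'I_K (fun i s => i \in I -> 0 < x i + s * d i) (nbhs (0:R)) _) => i.
  case: (boolP (i \in I)) => iI; last by apply: filterE => s.
  have xi := Hx i iI.
  have d1 : 0 < `|d i| + 1 by rewrite ltr_wpDl.
  apply/(@nbhs_norm0P _ R^o); exists (x i / (`|d i| + 1)) => /=; first by rewrite divr_gt0.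
  move=> s /= Hs _.
  have : `|s * d i| < x i.
    rewrite normrM; apply: (@le_lt_trans _ _ (`|s| * (`|d i| + 1))).
      by rewrite ler_wpM2l // lerDl.
    by rewrite -ltr_pdivlMr.
  move/ltr_normlP => [h1 h2]; lra.
move=> H; have [e e0 He] := (@nbhs_norm0P _ R^o _).1 H.
exists e => // s Hs; exact: He.
Qed.

End H.

Arguments near_pos {R K I x} d _.
Arguments argmin_stationary {R K C beta gam I L S x d e} _ _ _.

Lemma sum_splitT (R : realType) (K : nat) (U : {set 'I_K}) (F : 'I_K -> R) :
  \sum_(i in [set: 'I_K]) F i = \sum_(i in U) F i + \sum_(i in ~: U) F i.
Proof.
rewrite (bigID (fun i => i \in U)) /=; congr (_ + _);
by apply: eq_bigl => i; rewrite !inE.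
Qed.

Lemma sum_split (R : realType) (K : nat) (U : {set 'I_K}) (F : 'I_K -> R) :
  \sum_i F i = \sum_(i in U) F i + \sum_(i in ~: U) F i.
Proof.
rewrite (bigID (fun i => i \in U)) /=; congr (_ + _).
by apply: eq_bigl => i; rewrite !inE.
Qed.

Lemma phiI_split (R : realType) (K : nat) (U : {set 'I_K}) C beta g (x : 'I_K -> R) :
  phiI C beta g [set: 'I_K] x = phiI C beta g U x + phiI C beta g (~: U) x.
Proof. rewrite /phiI !(sum_splitT _ _ U); ring. Qed.

Theorem lemma1 (R : realType) (K t : nat) (beta C : R)
  (g0 g1 : 'I_K -> R) (lhat : nat -> 'I_K -> R)
  (U V : {set 'I_K})
  (p0 p1 q0 q1 pbU pbV : 'I_K -> R) :
  0 < beta -> beta < 1 -> 0 < C ->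
  (forall i, 0 < g0 i) -> (forall i, 0 < g1 i) ->
  (1 <= t)%N ->
  (forall tau i, (1 <= tau <= t)%N -> 0 <= lhat tau i) ->
  U :|: V = [set: 'I_K] -> [disjoint U & V] -> U != finset.set0 ->
  let L0 := fun i => \sum_(1 <= tau < t) lhat tau i in
  let L1 := fun i => \sum_(1 <= tau < t.+1) lhat tau i in
  is_argmin (@simplex_dom R K) (objI C beta g0 [set: 'I_K] L0) p0 ->
  is_argmin (@simplex_dom R K) (objI C beta g1 [set: 'I_K] L1) p1 ->
  is_argmin (OmegaU_dom U) (objI C beta g0 U L0) q0 ->
  is_argmin (OmegaU_dom U) (objI C beta g1 U L1) q1 ->
  is_argmin (restr_dom U (\sum_(i in U) p0 i)) (objI C beta g1 U L1) pbU ->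
  is_argmin (restr_dom V (\sum_(i in V) p0 i)) (objI C beta g1 V L1) pbV ->
  let pb := fun i => pbU i + pbV i in
  BregI C beta g0 g1 [set: 'I_K] p0 p1 - BregI C beta g0 g1 U q0 q1
  <= BregI C beta g0 g1 V p0 pb
     + (BregI C beta g0 g1 U p0 pb - BregI C beta g0 g1 U q0 q1)
     + BregI C beta g1 g1 [set: 'I_K] pb p1.
Proof.
move=> hb0 hb1 hC hg0 hg1 ht hl hUV hdisj hU0 L0 L1 [Sp0 _] AP1 _ _ APU APV.
cbv zeta; set pb := fun i => pbU i + pbV i.
have VE : V = ~: U.
  apply/setP => i; rewrite finset.in_setC.
  have /setP/(_ i) := hUV; rewrite !inE.
  move: hdisj; rewrite disjoint_subset => /fintype.subsetP/(_ i); rewrite !inE.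
  by case: (i \in U); case: (i \in V) => //= H _; have := H isT.
subst V.
move: Sp0 => [p0nn [p0s p0pos]].
have [[U1 [U2 [U3 U4]]] _] := APU.
have [[V1 [V2 [V3 V4]]] _] := APV.
rewrite finset.setCK in V2 V3.
have pbU_off : forall i, i \notin U -> pbU i = 0.
  move=> i iU; apply: (psumr_eq0P (P := fun i => i \in ~: U)) U2 _ _ => //.
  by rewrite finset.in_setC.
have pbV_off : forall i, i \in U -> pbV i = 0.
  by move=> i iU; apply: (psumr_eq0P (P := fun i => i \in U)) V2 _ _.
pose d := fun i => p0 i - pb i.
have sumpb : \sum_i pb i = 1.
  rewrite /pb big_split /= (sum_split _ _ U pbU) (sum_split _ _ U pbV) U2 V2 U3 V3.
  by rewrite addr0 add0r -sum_split.
have sumd : \sum_i d i = 0 by rewrite /d sumrB p0s sumpb subrr.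
have dUsum : \sum_(i in U) d i = 0.
  by rewrite /d sumrB /pb big_split /= U3 V2 addr0 subrr.
have dVsum : \sum_(i in ~: U) d i = 0.
  by rewrite /d sumrB /pb big_split /= U2 V3 add0r subrr.
have [[p1nn [p1s p1pos]] _] := AP1.
have [e1 e10 He1] := @near_pos _ _ [set: 'I_K] _ d (fun i _ => p1pos i).
have H1s : forall s : R, `|s| < e1 -> simplex_dom (fun i => p1 i + s * d i) /\
    (forall i, i \in [set: 'I_K] -> 0 < p1 i + s * d i).
  move=> s hs; have hp := He1 s hs; split => //; split.
    by move=> i; apply: ltW; apply: hp; rewrite inE.
  split; last by move=> i; apply: hp; rewrite inE.
  by rewrite big_split /= -mulr_sumr sumd mulr0 addr0 p1s.
have E1 := argmin_stationary e10 H1s AP1.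
pose dU := fun i => if i \in U then d i else 0.
have sdU : \sum_(i in U) dU i = 0.
  by rewrite -[RHS]dUsum; apply: eq_bigr => i iU; rewrite /dU iU.
have [e2 e20 He2] := near_pos dU U4.
have H2s : forall s : R, `|s| < e2 ->
    restr_dom U (\sum_(i in U) p0 i) (fun i => pbU i + s * dU i) /\
    (forall i, i \in U -> 0 < pbU i + s * dU i).
  move=> s hs; have hp := He2 s hs; split => //; split.
    move=> i; case: (boolP (i \in U)) => iU; first by apply: ltW; apply: hp.
    by rewrite /dU (negbTE iU) mulr0 addr0; exact: U1.
  split.
    rewrite big_split /= U2 add0r -mulr_sumr big1 ?mulr0 // => i.
    by rewrite finset.in_setC /dU => /negbTE ->.
  split => //.
  by rewrite big_split /= U3 -mulr_sumr sdU mulr0 addr0.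
have E2 := argmin_stationary e20 H2s APU.
pose dV := fun i => if i \in U then 0 else d i.
have sdV : \sum_(i in ~: U) dV i = 0.
  rewrite -[RHS]dVsum; apply: eq_bigr => i; rewrite finset.in_setC => iU.
  by rewrite /dV (negbTE iU).
have [e3 e30 He3] := near_pos dV V4.
have H3s : forall s : R, `|s| < e3 ->
    restr_dom (~: U) (\sum_(i in ~: U) p0 i) (fun i => pbV i + s * dV i) /\
    (forall i, i \in ~: U -> 0 < pbV i + s * dV i).
  move=> s hs; have hp := He3 s hs; split => //; split.
    move=> i; case: (boolP (i \in U)) => iU.
      by rewrite /dV iU mulr0 addr0; exact: V1.
    by apply: ltW; apply: hp; rewrite finset.in_setC.
  split.
    rewrite finset.setCK big_split /= V2 add0r -mulr_sumr big1 ?mulr0 // => i iU.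
    by rewrite /dV iU.
  split => //.
  by rewrite big_split /= V3 -mulr_sumr sdV mulr0 addr0.
have E3 := argmin_stationary e30 H3s APV.
have sumdL : \sum_i d i * L1 i = \sum_i dU i * L1 i + \sum_i dV i * L1 i.
  rewrite -big_split; apply: eq_bigr => i _; rewrite /dU /dV /=.
  by case: (i \in U); rewrite ?mul0r ?addr0 ?add0r.
have EU : \sum_(i in U) dphi C beta g1 i pbU * dU i = \sum_(i in U) dphi C beta g1 i pb * d i.
  by apply: eq_bigr => i iU; rewrite /dU iU /dphi /pb /= pbV_off // addr0.
have EV : \sum_(i in ~: U) dphi C beta g1 i pbV * dV i = \sum_(i in ~: U) dphi C beta g1 i pb * d i.
  apply: eq_bigr => i; rewrite finset.in_setC => iU.
  by rewrite /dV (negbTE iU) /dphi /pb /= pbU_off // add0r.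
have KEY' : \sum_(i in [set: 'I_K]) dphi C beta g1 i p1 * d i =
   \sum_(i in U) dphi C beta g1 i pb * d i + \sum_(i in ~: U) dphi C beta g1 i pb * d i.
  rewrite -EU -EV; rewrite sumdL in E1; lra.
have KEY : \sum_(i in [set: 'I_K]) dphi C beta g1 i p1 * (p0 i - pb i) =
   \sum_(i in U) dphi C beta g1 i pb * (p0 i - pb i) + \sum_(i in ~: U) dphi C beta g1 i pb * (p0 i - pb i).
  exact: KEY'.
have F : \sum_(i in [set: 'I_K]) dphi C beta g1 i p1 * (p0 i - p1 i) =
   \sum_(i in [set: 'I_K]) dphi C beta g1 i p1 * (pb i - p1 i) +
   \sum_(i in [set: 'I_K]) dphi C beta g1 i p1 * (p0 i - pb i).
  by rewrite -big_split; apply: eq_bigr => i _ /=; ring.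
rewrite /BregI !(phiI_split _ _ U).
rewrite F KEY.
match goal with |- is_true (?a <= ?b) => have E : a = b by ring end.
by rewrite E.
Qed.
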